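(* Let $D$ be an oriented graph and let $P=(u,w_1,\ldots,w_q,v)$ be a directed $(u,v)$-path in $D$ that is not a shortest directed $(u,v)$-path, for some $q\geq 1$, such that $d_D^-(w_i)=d_D^+(w_i)=1$ for every $i\in\{1,\ldots,q\}$. Then any minimum hull set of $D$ in the geodetic convexity contains at least one of the vertices $w_1,\ldots,w_q$.
   Context: An oriented graph is an orientation of a finite simple graph; $d_D^-$ and $d_D^+$ denote in- and out-degree. The geodetic interval function $I_g(u,v)$ is the set of vertices on some shortest directed $(u,v)$-path or some shortest directed $(v,u)$-path. For $S\subseteq V(D)$, $I_g(S)=\bigcup_{u,v\in S}I_g(u,v)$; $C$ is convex if $I_g(C)=C$; the convex hull of $S$ is the smallest convex set containing $S$; a hull set is a set whose convex hull is $V(D)$; a minimum hull set is one of minimum size. *)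

(* Defs.v *)
From mathcomp Require Import all_boot.
Set Implicit Arguments. Unset Strict Implicit. Unset Printing Implicit Defensive.

Section Geodetic.
Variables (T : finType) (a : rel T).

Definition oriented : Prop :=
  (forall x, ~~ a x x) /\ (forall x y, a x y -> ~~ a y x).

Definition indeg (x : T) : nat := #|[set y | a y x]|.
Definition outdeg (x : T) : nat := #|[set y | a x y]|.

(* directed (u,v)-path with vertex sequence u :: s, of length size s *)
Definition dpath (u v : T) (s : seq T) : bool :=
  [&& path a u s, last u s == v & uniq (u :: s)].

Definition shortest_dpath (u v : T) (s : seq T) : Prop :=
  dpath u v s /\ forall s', dpath u v s' -> size s <= size s'.

Definition in_Ig (u v z : T) : Prop :=
  (exists s, shortest_dpath u v s /\ z \in u :: s) \/
  (exists s, shortest_dpath v u s /\ z \in v :: s).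

Definition in_IgS (S : {set T}) (z : T) : Prop :=
  exists u v, [/\ u \in S, v \in S & in_Ig u v z].

Definition convex (C : {set T}) : Prop := forall z, in_IgS C z <-> z \in C.

Definition convex_hull (S H : {set T}) : Prop :=
  [/\ convex H, S \subset H &
      forall C, convex C -> S \subset C -> H \subset C].

Definition hull_set (S : {set T}) : Prop := convex_hull S setT.

Definition min_hull_set (S : {set T}) : Prop :=
  hull_set S /\ forall S', hull_set S' -> #|S| <= #|S'|.

End Geodetic.

(* Main.v *)
Require Import Defs.
From mathcomp Require Import all_boot.
From mathcomp Require Import zify.

Section Aux.
Variables (T : finType) (a : rel T).

Lemma size_shorten (x : T) p : size (shorten x p) <= size p.
Proof.
elim: p x => [|y p IH] x //=.
case: ifP => _ /=; last by rewrite ltnS.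
exact: leq_trans (IH x) (leqnSn _).
Qed.

Lemma walk_dpath x y t : path a x t -> last x t = y ->
  exists t', dpath a x y t' /\ size t' <= size t.
Proof.
move=> Hp Hl; have := size_shorten x t.
case: (shortenP Hp) Hl => p' Hp' Hu _ Hl Hs.
exists p'; split => //; rewrite /dpath Hp' Hu Hl eqxx.
done.
Qed.

Lemma deg1_uniq (w b b' : T) (A : {set T}) :
  #|A| = 1 -> b \in A -> b' \in A -> b = b'.
Proof.
move=> /eqP /cards1P [c ->]; rewrite !inE => /eqP -> /eqP -> //.
Qed.

Lemma indeg_uniq w b b' : indeg a w = 1 -> a b w -> a b' w -> b = b'.
Proof.
move=> H Hb Hb'; apply: (@deg1_uniq w b b' [set y | a y w]) => //;
by rewrite inE.
Qed.

Lemma outdeg_uniq w b b' : outdeg a w = 1 -> a w b -> a w b' -> b = b'.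
Proof.
move=> H Hb Hb'; apply: (@deg1_uniq w b b' [set y | a w y]) => //;
by rewrite inE.
Qed.

Lemma core (u v : T) (ws : seq T) :
  dpath a u v (rcons ws v) ->
  ~ shortest_dpath a u v (rcons ws v) ->
  (forall w, w \in ws -> indeg a w = 1 /\ outdeg a w = 1) ->
  forall x y s z, x \notin ws -> y \notin ws -> shortest_dpath a x y s ->
  z \in x :: s -> z \notin ws.
Proof.
move=> Hd Hns Hdeg x y s z Hx Hy [Hds Hmin] Hz.
apply/negP => Hzw.
case/and3P: Hds => Hps /eqP Hls _.
case/and3P: (Hd) => Hpc _ _.
set q := size ws.
set f := fun i => nth x (x :: s) i.
set g := fun i => nth u (u :: rcons ws v) i.
have fa : forall i, i < size s -> a (f i) (f i.+1).
  by move=> i Hi; move/(pathP x): Hps => /(_ i Hi).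
have ga : forall i, i < q.+1 -> a (g i) (g i.+1).
  move=> i Hi; move/(pathP u): Hpc => H; apply: H; by rewrite size_rcons.
have gws : forall i, 0 < i <= q -> g i \in ws.
  move=> [|i] //= Hi; rewrite /g /= nth_rcons Hi; exact: mem_nth.
have f0 : f 0 = x by [].
have fl : f (size s) = y by rewrite /f -last_nth.
pose k := index z (x :: s).
have Hk : k <= size s by have := index_mem z (x :: s); rewrite Hz /= ltnS.
have fk : f k = z by rewrite /f nth_index.
pose j := (index z ws).+1.
have Hj : 0 < j <= q by rewrite /j /= index_mem.
have gj : g j = z by rewrite /g /= nth_rcons index_mem Hzw nth_index.
have back : forall t, t <= j -> t <= k /\ f (k - t) = g (j - t).
  elim => [|t IH] Ht; first by rewrite !subn0 fk gj.
  have [Htk Heq] := IH (ltnW Ht).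
  have Hg : g (j - t) \in ws by apply: gws; lia.
  have Htk' : t < k.
    rewrite ltn_neqAle Htk andbT; apply/negP => /eqP Et.
    by move: Hg; rewrite -Heq Et subnn f0 (negbTE Hx).
  split => //.
  have E1 : k - t = (k - t.+1).+1 by lia.
  have E2 : j - t = (j - t.+1).+1 by lia.
  have [Hin _] := Hdeg _ Hg.
  apply: (@indeg_uniq (g (j - t)) (f (k - t.+1)) (g (j - t.+1)) Hin).
    rewrite -Heq E1; apply: fa; lia.
  rewrite E2; apply: ga; lia.
have fwd : forall t, t <= q.+1 - j -> k + t <= size s /\ f (k + t) = g (j + t).
  elim => [|t IH] Ht; first by rewrite !addn0 fk gj.
  have [Htk Heq] := IH (ltnW Ht).
  have Hg : g (j + t) \in ws by apply: gws; lia.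
  have Htk' : k + t < size s.
    rewrite ltn_neqAle Htk andbT; apply/negP => /eqP Et.
    by move: Hg; rewrite -Heq Et fl (negbTE Hy).
  split; first by rewrite addnS.
  have [_ Hout] := Hdeg _ Hg.
  rewrite !addnS; apply: (@outdeg_uniq (g (j + t)) (f (k + t).+1) (g (j + t).+1) Hout).
    rewrite -Heq; apply: fa; lia.
  apply: ga; lia.
have [Hjk _] := back j (leqnn j).
pose st := k - j.
have Hfg : forall i, i <= q.+1 -> f (st + i) = g i.
  move=> i Hi; case: (leqP i j) => Hij.
    have [_ E] := back (j - i) (leq_subr _ _).
    have -> : st + i = k - (j - i) by rewrite /st; lia.
    by rewrite E; congr g; lia.
  have [_ E] := fwd (i - j) ltac:(lia).
  have -> : st + i = k + (i - j) by rewrite /st; lia.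
  by rewrite E; congr g; lia.
have Hsz : st + q.+1 <= size s.
  have [H _] := fwd (q.+1 - j) (leqnn _); rewrite /st; lia.
have Hmid : take q.+1 (drop st s) = rcons ws v.
  apply: (@eq_from_nth _ u).
    rewrite size_takel ?size_rcons // size_drop; lia.
  move=> i; rewrite size_takel ?size_drop; last lia.
  move=> Hi; rewrite nth_take // nth_drop.
  have := Hfg i.+1 Hi; rewrite /f /g /= addnS => <-.
  apply: set_nth_default; lia.
have Es : s = take st s ++ rcons ws v ++ drop (st + q.+1) s.
  by rewrite -Hmid addnC -drop_drop !cat_take_drop.
have Hlu : last x (take st s) = u.
  rewrite (last_nth x) size_takel; last first.
    exact: leq_trans (leq_addr _ _) Hsz.
  have -> : x :: take st s = take st.+1 (x :: s) by [].
  rewrite nth_take // -[st]addn0; exact: (Hfg 0 isT).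
apply: Hns; split => // s' Hs'; rewrite leqNgt; apply/negP => Hlt.
case/and3P: Hs' => Hps' /eqP Hls' _.
have Hps2 := Hps; rewrite Es !cat_path Hlu last_rcons in Hps2.
case/and3P: Hps2 => P1 _ P3.
have Hls2 := Hls; rewrite Es !last_cat Hlu last_rcons in Hls2.
have [t' [Hdt' Hst']] :=
  @walk_dpath x y (take st s ++ s' ++ drop (st + q.+1) s)
    ltac:(by rewrite !cat_path P1 Hlu Hps' Hls' P3)
    ltac:(by rewrite !last_cat Hlu Hls').
have := Hmin _ Hdt'.
have Hss : size s = size (take st s ++ rcons ws v ++ drop (st + q.+1) s) by rewrite -Es.
move: Hst' Hss Hlt; rewrite !size_cat !size_rcons; clear; lia.
Qed.

End Aux.


Theorem proposition4 (T : finType) (a : rel T) (u v : T) (ws : seq T) :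
  oriented a ->
  0 < size ws ->
  dpath a u v (rcons ws v) ->
  ~ shortest_dpath a u v (rcons ws v) ->
  (forall w, w \in ws -> indeg a w = 1 /\ outdeg a w = 1) ->
  forall S : {set T}, min_hull_set a S -> exists2 w, w \in ws & w \in S.
Proof.
move=> _ Hq Hd Hns Hdeg S [[_ _ Hhull] _].
pose C := [set w | w \notin ws].
have HC : convex a C.
  move=> z; split.
    case=> x [y [Hx Hy Hi]]; rewrite /C !inE in Hx Hy *.
    case: Hi => [[s [Hs Hz]] | [s [Hs Hz]]].
      exact: (@core _ a u v ws Hd Hns Hdeg _ _ _ _ Hx Hy Hs Hz).
    exact: (@core _ a u v ws Hd Hns Hdeg _ _ _ _ Hy Hx Hs Hz).
  move=> Hz; exists z, z; split => //; left; exists [::]; split => //.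
    split; first by rewrite /dpath /= eqxx.
    by [].
  by rewrite inE.
case Hsub: (S \subset C).
  have := Hhull C HC Hsub => /subsetP /(_ (head u ws) (in_setT _)).
  by rewrite inE; case: ws Hq {Hd Hns Hdeg C HC Hsub} => //= w ws' _; rewrite inE eqxx.
case/subsetPn: (negbT Hsub) => w HwS; rewrite inE negbK => Hw.
by exists w.
Qed.
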